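(* Let $A=(A_1,A_2)\in\mathbb{N}^2$ with $\gcd(A_1,A_2)=1$, let $s\ge 2$, and let $$p(x,y)=\sum_{i=1}^s a_i x^{\alpha_i}y^{\beta_i},$$ where $a_i\neq 0$, $\alpha_i,\beta_i\in\mathbb{N}\cup\{0\}$, $A_1\alpha_i+A_2\beta_i=B$ for all $i=1,\dots,s$ with a common $B\in\mathbb{N}$, and $\alpha_1>\alpha_2>\dots>\alpha_s\ge 0$. Put $\nu_i=(\alpha_1-\alpha_i)/A_2$ (these are nonnegative integers) and $g(u)=\sum_{i=1}^s a_i u^{\nu_i}$. Then $p(x,y)\ge 0$ for all $(x,y)\in\mathbb{R}^2$ if and only if both of the following hold: (1) $a_1>0$, $a_s>0$, and $\alpha_1,\beta_1,\alpha_s,\beta_s$ are even nonnegative integers; (2) the polynomial $g$ is nonnegative on $\mathbb{R}$, i.e. either $g$ has no real roots or all its real roots have even multiplicity.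
   Context: $\mathbb{N}=\{1,2,\dots\}$. The polynomial $g$ is called the characteristic polynomial of the form $p$; for $x\neq 0$ one has $p(x,y)=x^{\alpha_1}y^{\beta_1}g(x^{-A_2}y^{A_1})$. *)

(* Defs.v *)
From HB Require Import structures.
From mathcomp Require Import all_boot all_order all_algebra.
From mathcomp Require Import reals.
Set Implicit Arguments. Unset Strict Implicit. Unset Printing Implicit Defensive.
Import Order.TTheory GRing.Theory Num.Theory.
Local Open Scope ring_scope.

(* Terms are indexed 0..s-1 (paper: 1..s). *)

Definition qh_form (R : realType) (s : nat) (a : nat -> R) (alpha beta : nat -> nat)
  (x y : R) : R :=
  \sum_(i < s) a i * x ^+ alpha i * y ^+ beta i.

(* nu_i = (alpha_1 - alpha_i) / A_2 (an exact division under the hypotheses). *)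
Definition nu (A2 : nat) (alpha : nat -> nat) (i : nat) : nat :=
  ((alpha 0 - alpha i) %/ A2)%N.

Definition form_charpoly (R : realType) (s : nat) (a : nat -> R) (A2 : nat)
  (alpha : nat -> nat) : {poly R} :=
  \sum_(i < s) a i *: 'X^(nu A2 alpha i).

(* Main.v *)
Require Import Defs.
From HB Require Import structures.
From mathcomp Require Import all_boot all_order all_algebra.
From mathcomp Require Import reals.
From mathcomp Require Import zify ring lra.
Import Order.TTheory GRing.Theory Num.Theory.
Local Open Scope ring_scope.

Lemma lead_nonneg (R : realFieldType) (s : nat) (c : nat -> R) (e : nat -> nat) (j : nat) :
  (j < s)%N -> (forall i, (i < s)%N -> i != j -> (e i < e j)%N) ->
  (forall x : R, 0 <= \sum_(i < s) c i * x ^+ e i) -> 0 <= c j.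
Proof.
move=> js he H; rewrite leNgt; apply/negP => cj.
pose M := \sum_(i < s | i != Ordinal js) `|c i|.
have M0 : 0 <= M by apply: sumr_ge0 => i _; exact: normr_ge0.
pose x := 1 + (M + 1) / (- c j).
have cj' : 0 < - c j by rewrite oppr_gt0.
have x1 : 1 < x by rewrite /x ltrDl divr_gt0 //; lra.
have x0 : 0 < x by lra.
have key : x * (c j * x ^+ e j) + M * x ^+ e j < 0.
  have -> : x * (c j * x ^+ e j) + M * x ^+ e j = x ^+ e j * (c j * x + M) by ring.
  rewrite pmulr_rlt0 ?exprn_gt0 //.
  have -> : c j * x = c j - (M + 1).
    rewrite /x; field.
    by rewrite neq_lt cj.
  lra.
have le : x * \sum_(i < s | i != Ordinal js) c i * x ^+ e i <= M * x ^+ e j.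
  rewrite mulr_sumr /M mulr_suml; apply: ler_sum.
  move=> i hi.
  apply: le_trans (ler_norm (x * (c i * x ^+ e i))) _.
  rewrite !normrM (ger0_norm (ltW x0)) normrX (ger0_norm (ltW x0)).
  rewrite mulrCA -exprS; apply: ler_wpM2l; first exact: normr_ge0.
  rewrite ler_eXn2l //; apply: he; first exact: ltn_ord.
  by apply: contra hi => /eqP hij; apply/eqP/val_inj.
have := H x; rewrite (bigD1 (Ordinal js)) //= => Hx.
have : 0 <= x * (c j * x ^+ e j + \sum_(i < s | i != Ordinal js) c i * x ^+ e i).
  by rewrite mulr_ge0 // ltW.
rewrite mulrDr; lra.
Qed.

Lemma alpha_lt (s : nat) (alpha : nat -> nat) :
  (forall i, (i.+1 < s)%N -> (alpha i.+1 < alpha i)%N) ->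
  forall i j, (i < j)%N -> (j < s)%N -> (alpha j < alpha i)%N.
Proof.
move=> h i; elim=> [//|j IH] ij js.
rewrite ltnS leq_eqVlt in ij; case/orP: ij => [/eqP ->|ij]; first exact: h.
exact: ltn_trans (h j js) (IH ij (ltnW js)).
Qed.

Lemma nu_facts (A1 A2 s B : nat) (alpha beta : nat -> nat) :
  (0 < A1)%N -> (0 < A2)%N -> coprime A1 A2 ->
  (forall i, (i < s)%N -> (A1 * alpha i + A2 * beta i)%N = B) ->
  (forall i j, (i < j)%N -> (j < s)%N -> (alpha j < alpha i)%N) ->
  forall i, (i < s)%N ->
  alpha 0%N = (alpha i + A2 * nu A2 alpha i)%N /\
  beta i = (beta 0%N + A1 * nu A2 alpha i)%N.
Proof.
move=> a1 a2 co hB hlt i iS.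
have le : (alpha i <= alpha 0%N)%N.
  by case: i iS => [//|i] iS; apply: ltnW; apply: hlt.
have s0 : (0 < s)%N by apply: leq_ltn_trans iS.
have e := hB 0%N s0; have ei := hB i iS.
have dv : (A2 %| (alpha 0%N - alpha i) * A1)%N.
  apply/dvdnP; exists (beta i - beta 0%N)%N; nia.
rewrite Gauss_dvdl in dv; last by rewrite coprime_sym.
have hn := divnK dv.
rewrite /nu; set k := ((alpha 0%N - alpha i) %/ A2)%N in hn *.
split; first by nia.
apply/eqP; rewrite -(eqn_pmul2l a2); apply/eqP; nia.
Qed.

Lemma odd_sign (R : realDomainType) (a : R) (n : nat) :
  0 < a -> 0 <= a * (-1) ^+ n -> ~~ odd n.
Proof.
move=> ha; rewrite -signr_odd; case: (odd n) => //=; rewrite expr1; lra.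
Qed.

Lemma geval (R : realType) (s : nat) (a : nat -> R) (A2 : nat) (alpha : nat -> nat) u :
  (form_charpoly s a A2 alpha).[u] = \sum_(i < s) a i * u ^+ nu A2 alpha i.
Proof.
rewrite /form_charpoly horner_sum; apply: eq_bigr => i _.
by rewrite hornerZ hornerXn.
Qed.

Theorem mainTheorem1 (R : realType) (A1 A2 : nat) (s : nat) (B : nat)
  (a : nat -> R) (alpha beta : nat -> nat) :
  (0 < A1)%N -> (0 < A2)%N -> coprime A1 A2 ->
  (2 <= s)%N ->
  (0 < B)%N ->
  (forall i, (i < s)%N -> a i != 0) ->
  (forall i, (i < s)%N -> (A1 * alpha i + A2 * beta i)%N = B) ->
  (forall i, (i.+1 < s)%N -> (alpha i.+1 < alpha i)%N) ->
  (forall x y : R, 0 <= qh_form s a alpha beta x y) <->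
  ((0 < a 0%N /\ 0 < a s.-1 /\
    ~~ odd (alpha 0%N) /\ ~~ odd (beta 0%N) /\
    ~~ odd (alpha s.-1) /\ ~~ odd (beta s.-1)) /\
   (forall u : R, 0 <= (form_charpoly s a A2 alpha).[u])).
Proof.
move=> a1 a2 co s2 B0 anz hB hmono.
have hlt := @alpha_lt s alpha hmono.
have hnu := @nu_facts A1 A2 s B alpha beta a1 a2 co hB hlt.
have s0 : (0 < s)%N by apply: leq_trans s2.
have sl : (s.-1 < s)%N by rewrite prednK.
have beta_lt : forall i, (i < s)%N -> i != s.-1 -> (beta i < beta s.-1)%N.
  move=> i iS ne.
  have il : (i < s.-1)%N.
    by rewrite ltn_neqAle ne /= -ltnS prednK.
  have := hlt _ _ il sl; have := hB _ iS; have := hB _ sl; nia.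
have alpha_lt0 : forall i, (i < s)%N -> i != 0%N -> (alpha i < alpha 0%N)%N.
  by move=> i iS ne; apply: hlt => //; rewrite lt0n.
rewrite /qh_form; split.
- move=> H.
  have G0 : forall x0 y0 : R, 0 <= a 0%N * x0 ^+ alpha 0%N * y0 ^+ beta 0%N.
    move=> x0 y0.
    have := @lead_nonneg R s (fun i => a i * x0 ^+ alpha i * y0 ^+ beta i) alpha 0%N s0.
    rewrite mulrAC; apply => //.
    move=> x; have := H (x0 * x) y0.
    by under eq_bigr => i _ do rewrite exprMn mulrA mulrAC.
  have G1 : forall x0 y0 : R, 0 <= a s.-1 * x0 ^+ alpha s.-1 * y0 ^+ beta s.-1.
    move=> x0 y0.
    have := @lead_nonneg R s (fun i => a i * x0 ^+ alpha i * y0 ^+ beta i) beta s.-1 sl.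
    apply => //.
    move=> y; have := H x0 (y0 * y).
    by under eq_bigr => i _ do rewrite exprMn mulrA.
  have a0p : 0 < a 0%N.
    by rewrite lt_def anz //=; have := G0 1 1; rewrite !expr1n !mulr1.
  have asp : 0 < a s.-1.
    by rewrite lt_def anz //=; have := G1 1 1; rewrite !expr1n !mulr1.
  have o1 := @odd_sign R _ (alpha 0%N) a0p.
  have o2 := @odd_sign R _ (beta 0%N) a0p.
  have o3 := @odd_sign R _ (alpha s.-1) asp.
  have o4 := @odd_sign R _ (beta s.-1) asp.
  have := G0 (-1) 1; have := G0 1 (-1); have := G1 (-1) 1; have := G1 1 (-1).
  rewrite !expr1n !mulr1 => /o4 e4 /o3 e3 /o2 e2 /o1 e1.
  split; first by [].
  move=> u; rewrite geval.
  case: (egcdnP A2 a1) => k l hkl _.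
  have g1 : gcdn A1 A2 = 1%N by apply/eqP.
  rewrite g1 in hkl.
  have hnu0 : nu A2 alpha 0 = 0%N by rewrite /nu subnn div0n.
  have Hp := H (u ^+ l) (u ^+ k).
  pose E := (l * alpha 0%N + k * beta 0%N)%N.
  have eqp : \sum_(i < s) a i * (u ^+ l) ^+ alpha i * (u ^+ k) ^+ beta i
      = u ^+ E * \sum_(i < s) a i * u ^+ nu A2 alpha i.
    rewrite mulr_sumr; apply: eq_bigr => i _.
    have [h1 h2] := hnu i (ltn_ord i).
    rewrite -!exprM -mulrA -exprD [RHS]mulrCA -exprD; congr (_ * _ ^+ _).
    rewrite /E h1 h2 !mulnDr !mulnA hkl mulnDl mul1n; lia.
  rewrite eqp in Hp.
  case: (eqVneq u 0) => [->|u0].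
    rewrite (bigD1 (Ordinal s0)) //= hnu0 expr0 mulr1 big1 ?addr0; first exact: ltW.
    move=> i ne; rewrite expr0n.
    have [h1 _] := hnu i (ltn_ord i).
    have hi0 : val i != 0%N by apply: contra ne => /eqP hi; apply/eqP/val_inj.
    have := alpha_lt0 i (ltn_ord i) hi0.
    case: (nu A2 alpha i) h1 => [|n] h1 /=; last by rewrite mulr0.
    move=> hh; exfalso; lia.
  have Ep : 0 < u ^+ E.
    rewrite exprn_even_gt0 ?u0 ?orbT // /E oddD !oddM.
    by rewrite (negbTE e1) (negbTE e2) !andbF.
  by rewrite pmulr_rge0 in Hp.
- case=> [[a0p [asp [e1 [e2 [e3 e4]]]]] hg] x y.
  case: (eqVneq x 0) => [->|x0].
    apply: sumr_ge0 => i _.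
    case: (eqVneq (val i) s.-1) => [->|ne].
      apply: mulr_ge0; last exact: exprn_even_ge0.
      by apply: mulr_ge0; [exact: ltW | exact: exprn_ge0].
    have il : (i < s.-1)%N by rewrite ltn_neqAle ne /= -ltnS prednK.
    have := hlt _ _ il sl => hl.
    by rewrite expr0n gtn_eqF ?mulr0 ?mul0r //; apply: leq_ltn_trans hl.
  have eqp : \sum_(i < s) a i * x ^+ alpha i * y ^+ beta i
      = x ^+ alpha 0%N * y ^+ beta 0%N *
        \sum_(i < s) a i * (x^-1 ^+ A2 * y ^+ A1) ^+ nu A2 alpha i.
    rewrite mulr_sumr; apply: eq_bigr => i _.
    have [h1 h2] := hnu i (ltn_ord i).
    rewrite h1 h2 !exprD exprMn -!exprM exprVn.
    have : x ^+ (A2 * nu A2 alpha i) != 0 by rewrite expf_neq0.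
    move: (x ^+ (A2 * nu A2 alpha i)) => X X0.
    by field.
  rewrite eqp; apply: mulr_ge0.
    by apply: mulr_ge0; exact: exprn_even_ge0.
  by have := hg (x^-1 ^+ A2 * y ^+ A1); rewrite geval.
Qed.
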